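(* Let $k$ be an infinite Brauer field, let $d\ge 1$, assume that $\Sigma^*((d))$ holds, and fix $e\in\{0,\ldots,d\}\setminus\{1\}$. There is a constant $C(d)$ such that the following holds. Let $a_1,\ldots,a_n\in k$ be arbitrary and $b_1,\ldots,b_n\in k$ nonzero, and for $x,y\in k^n$ put $f(x,y)=a_1x_1^ey_1^{d-e}+\cdots+a_nx_n^ey_n^{d-e}$ and $g(x,y)=b_1x_1y_1^{d-1}+\cdots+b_nx_ny_n^{d-1}$. If $n>C(d)$, then there exist $x,y\in k^n$ with $f(x,y)=0$ and $g(x,y)\ne 0$.
   Context: A field $k$ is a Brauer field if for every $d\ge 1$ there is $N_k(d)$ such that every equation $a_1x_1^d+\cdots+a_nx_n^d=0$ with $n>N_k(d)$, $a_i\in k$, has a non-trivial solution in $k^n$. Multi-degrees are tuples $(e_1\ge\cdots\ge e_s\ge 1)$ of integers compared lexicographically. Strength: for a homogeneous $f$ of degree $d>0$, $\operatorname{str}(f)$ is the minimal $s$ with $f=\sum_{t=1}^s g_th_t$, $g_t,h_t$ homogeneous over $k$ of degrees $<d$; the strength of a tuple is the minimal strength of a nontrivial $k$-linear combination of its members of equal degree. $\Sigma(\underline{e})$ is the statement: there is a constant $C$ such that for every finite-dimensional $k$-vector space $U$ and every tuple $\underline{h}$ of homogeneous polynomials on $U$ of multi-degree $\underline{e}$ with $\operatorname{str}(\underline{h})>C$, the $k$-points of the common zero locus $Z(\underline{h})$ are Zariski dense. $\Sigma^*((d))$ is the statement that $\Sigma(\underline{e})$ holds for every multi-degree $\underline{e}$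 with first entry $<d$. *)

(* Defs.v *)
From HB Require Import structures.
From mathcomp Require Import all_boot all_order all_algebra.
From mathcomp Require Import mpoly.
Set Implicit Arguments.
Unset Strict Implicit.
Unset Printing Implicit Defensive.
Import Order.TTheory GRing.Theory.
Local Open Scope ring_scope.

Definition homog_of {k : fieldType} {m : nat} (d : nat) (p : {mpoly k[m]}) : bool :=
  p \is @ishomog1 m k d (Measure.clone _ (@mdeg m) _).

Definition Brauer (k : fieldType) : Prop :=
  forall d : nat, (1 <= d)%N ->
    exists N : nat, forall (n : nat) (a : 'I_n -> k), (N < n)%N ->
      exists x : 'I_n -> k, (exists i, x i != 0) /\ \sum_(i < n) a i * x i ^+ d = 0.

Definition infinite_field (k : fieldType) : Prop :=
  forall s : seq k, exists x : k, x \notin s.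

(* So "str f <= C" iff
   exists s <= C with str_decomp d f s, and "str f > C" is its negation. *)
Definition str_decomp {k : fieldType} {m : nat} (d : nat) (f : {mpoly k[m]}) (s : nat) : Prop :=
  exists (g h : 'I_s -> {mpoly k[m]}) (a b : 'I_s -> nat),
    (forall t, (a t < d)%N /\ (b t < d)%N /\ homog_of (a t) (g t) /\ homog_of (b t) (h t))
    /\ f = \sum_(t < s) g t * h t.

Definition str_gt {k : fieldType} {m : nat} (d : nat) (f : {mpoly k[m]}) (C : nat) : Prop :=
  ~ exists s : nat, (s <= C)%N /\ str_decomp d f s.

Definition multidegree (es : seq nat) : bool :=
  [&& es != [::], sorted geq es & all (fun e => 0 < e)%N es].

Definition tuple_str_gt {k : fieldType} {m : nat} (es : seq nat)
    (h : 'I_(size es) -> {mpoly k[m]}) (C : nat) : Prop :=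
  forall (j : nat) (c : 'I_(size es) -> k),
    (forall i : 'I_(size es), nth 0%N es i != j -> c i = 0) ->
    (exists i, c i != 0) ->
    str_gt j (\sum_(i < size es) c i *: h i) C.

Definition kpoint_zero {k : fieldType} {m s : nat} (h : 'I_s -> {mpoly k[m]})
    (x : 'I_m -> k) : Prop := forall i, (h i).@[x] = 0.

(* The k-points of Z(h) are Zariski dense in Z(h): every polynomial over k
   vanishing on all k-points of Z(h) vanishes on Z(h), i.e. lies in the
   radical of the ideal generated by the h_i. *)
Definition kpoints_dense {k : fieldType} {m s : nat} (h : 'I_s -> {mpoly k[m]}) : Prop :=
  forall p : {mpoly k[m]},
    (forall x : 'I_m -> k, kpoint_zero h x -> p.@[x] = 0) ->
    exists (r : nat) (c : 'I_s -> {mpoly k[m]}), p ^+ r = \sum_(i < s) c i * h i.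

Definition Sigma (k : fieldType) (es : seq nat) : Prop :=
  exists C : nat, forall (m : nat) (h : 'I_(size es) -> {mpoly k[m]}),
    (forall i : 'I_(size es), homog_of (nth 0%N es i) (h i)) ->
    @tuple_str_gt k m es h C -> kpoints_dense h.

Definition SigmaStar (k : fieldType) (d : nat) : Prop :=
  forall es : seq nat, multidegree es -> (head 0%N es < d)%N -> Sigma k es.

(* Main.v *)
Require Import Defs.
From HB Require Import structures.
From mathcomp Require Import all_boot all_order all_algebra.
From mathcomp Require Import mpoly.
From mathcomp Require Import zify.
Import GRing.Theory.
Local Open Scope ring_scope.

Lemma inf_uniq {k : fieldType} (hinf : infinite_field k) (n : nat) :
  exists s : seq k, uniq s /\ size s = n.
Proof.
elim: n => [|n [s [us ss]]]; first by exists [::].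
have [x hx] := hinf s; exists (x :: s); by rewrite /= hx us ss.
Qed.

Lemma inf_nonroot (k : fieldType) (hinf : infinite_field k) (p : {poly k}) :
  p != 0 -> exists t, p.[t] != 0.
Proof.
move=> p0; have [s [us ss]] := inf_uniq hinf (size p).
case: (boolP (all (root p) s)) => [hall|/allPn [t _ ht]]; last by exists t.
by move: (max_poly_roots p0 hall us); rewrite ss ltnn.
Qed.

Theorem lemma6p2 (k : fieldType) (hB : Brauer k) (hinf : infinite_field k)
    (d : nat) (hd : (1 <= d)%N) (hS : SigmaStar k d)
    (e : nat) (he : (e <= d)%N) (he1 : e != 1%N) :
  exists C : nat, forall (n : nat) (a b : 'I_n -> k),
    (C < n)%N -> (forall i, b i != 0) ->
    exists x y : 'I_n -> k,
      \sum_(i < n) a i * x i ^+ e * y i ^+ (d - e) = 0 /\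
      \sum_(i < n) b i * x i * y i ^+ (d - 1) != 0.
Proof.
case: e he he1 => [|[|e]] he he1 //.
-
  have [N HN] := hB d hd; exists N => n a b hn hb.
  have [y [[i0 hy] hf]] := HN n a hn.
  exists (fun i => (i == i0)%:R), y; split.
    rewrite -[RHS]hf subn0; apply: eq_bigr => i _; by rewrite expr0 mulr1.
  rewrite (bigD1 i0) //= eqxx mulr1 big1 ?addr0.
    by rewrite mulf_neq0 ?expf_neq0.
  by move=> i /negbTE ->; rewrite mulr0 mul0r.
- set E := e.+2.
  have [N HN] := hB E isT; exists N => n a b hn hb.
  have [z [[i0 hz] hf]] := HN n a hn.
  set S := \sum_(i < n | i != i0) b i * z i.
  set P : {poly k} := S *: 'X^(E * (d - 1)) + (b i0 * z i0) *: 'X^(d - E).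
  have hne : (d - E)%N != (E * (d - 1))%N.
    rewrite /E; apply/eqP => h; move: he h hd; clear; nia.
  have P0 : P != 0.
    apply/eqP => /(congr1 (fun q : {poly k} => q`_(d - E))).
    rewrite coefD !coefZ !coefXn eqxx (negbTE hne) mulr0 add0r mulr1 coef0.
    by apply/eqP; rewrite mulf_neq0.
  have [t ht] := inf_nonroot _ hinf _ P0.
  exists (fun i => if i == i0 then z i * t ^+ (d - E) else z i).
  exists (fun i => if i == i0 then 1 else t ^+ E).
  split.
    rewrite (eq_bigr (fun i => (a i * z i ^+ E) * t ^+ (E * (d - E)))).
      by rewrite -mulr_suml hf mul0r.
    move=> i _; case: (i == i0).
      by rewrite expr1n mulr1 exprMn -exprM mulrA mulnC.
    by rewrite -exprM.
  rewrite (bigD1 i0) //= eqxx expr1n mulr1.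
  rewrite (eq_bigr (fun i => (b i * z i) * t ^+ (E * (d - 1)))); last first.
    by move=> i /negbTE ->; rewrite -exprM.
  rewrite -mulr_suml -/S.
  move: ht; rewrite /P hornerD !hornerZ !hornerXn.
  by rewrite addrC mulrA.
Qed.
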